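(* Let $X$ be a compact metric space, $f_1,f_2:X\to X$ continuous and $F=\{f_1,f_2\}$. If $F$ has the (Hausdorff metric) average shadowing property, then $F^k$ has the average shadowing property for every integer $k>1$.
   Context: Throughout, $(X,d)$ is a compact metric space, $\mathbb{N}=\{0,1,2,\dots\}$, $\mathbb{Z}^+=\{1,2,\dots\}$. $\mathbb{K}(X)$ is the set of nonempty compact subsets of $X$ with the Hausdorff metric $d_H(A,B)=\max\{\sup_{a\in A}\inf_{b\in B}d(a,b),\sup_{b\in B}\inf_{a\in A}d(a,b)\}$; a point $x$ is identified with $\{x\}$. Multiple mappings: $F=\{f_1,f_2\}$ maps $x$ to $F(x)=\{f_1(x),f_2(x)\}$; for $n\ge1$, $F^n(x)=\{f_{i_1}\cdots f_{i_n}(x): i_1,\dots,i_n\in\{1,2\}\}$, $F^0(x)=\{x\}$; for $A\in\mathbb{K}(X)$, $F^n(A)=\bigcup_{a\in A}F^n(a)$. For $k\ge1$, $F^k$ is regarded as the multiple mappings consisting of the $2^k$ maps $f_{i_1}\cdots f_{i_k}$, so $(F^k)^n=F^{kn}$. Average shadowing: for $G=F$ or $G=F^k$, a sequence $\{A_n\}_{n\ge0}\subset\mathbb{K}(X)$ with $A_0$ a singleton is a $\delta$-average-pseudo-orbit of $G$ if there is $N(\delta)>0$ such that for all $n\ge N(\delta)$ and all $m\in\mathbb{Z}^+$, $\frac1n\sum_{i=0}^{n-1}d_H(G(A_{i+m}),A_{i+m+1})<\delta$. $G$ has the average shadowing property if for every $\epsilon>0$ there is $\delta>0$ such that for every $\delta$-average-pseudo-orbit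 $\{A_n\}$ of $G$ there is $y\in X$ with $\limsup_{n\to\infty}\frac1n\sum_{i=0}^{n-1}d_H(G^i(y),A_i)<\epsilon$. *)

(* Defs.v *)
From Stdlib Require List.
From mathcomp Require Import all_boot all_order all_algebra.
From mathcomp Require Import all_classical all_reals all_analysis.
Set Implicit Arguments. Unset Strict Implicit. Unset Printing Implicit Defensive.
Import Order.TTheory GRing.Theory Num.Theory.
Local Open Scope classical_set_scope.
Local Open Scope ring_scope.

Section MetricDefs.
Variables (R : realType) (X : Type) (d : X -> X -> R).

Definition is_metric : Prop :=
  (forall x y, d x y = 0 <-> x = y) /\
  (forall x y, d x y = d y x) /\
  (forall x y z, d x z <= d x y + d y z).

Definition d_converges (u : nat -> X) (l : X) : Prop :=
  forall eps : R, 0 < eps -> exists N : nat, forall n, (N <= n)%N -> d (u n) l < eps.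

Definition d_compact (S : set X) : Prop :=
  forall u : nat -> X, (forall n, S (u n)) ->
    exists (phi : nat -> nat) (l : X),
      (forall n, (phi n < phi n.+1)%N) /\ S l /\ d_converges (u \o phi) l.

Definition d_continuous (f : X -> X) : Prop :=
  forall x (eps : R), 0 < eps -> exists2 delta : R, 0 < delta &
    forall y, d x y < delta -> d (f x) (f y) < eps.

Definition in_KX (A : set X) : Prop := A !=set0 /\ d_compact A.

Definition hausdorff (A B : set X) : R :=
  Num.max (sup [set inf [set d a b | b in B] | a in A])
          (sup [set inf [set d a b | a in A] | b in B]).

Definition mm_img (G : seq (X -> X)) (A : set X) : set X :=
  [set y | exists2 g, Stdlib.Lists.List.In g G & exists2 a, A a & y = g a].

Fixpoint mm_iter (G : seq (X -> X)) (n : nat) : seq (X -> X) :=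
  match n with
  | 0 => [:: id]
  | n'.+1 => [seq g \o h | g <- G, h <- mm_iter G n']
  end.

Definition avg_pseudo_orbit (G : seq (X -> X)) (delta : R) (A : nat -> set X) : Prop :=
  (forall n, in_KX (A n)) /\ (exists x, A 0%N = [set x]) /\
  exists N : nat, (0 < N)%N /\
    forall n m : nat, (N <= n)%N -> (0 < m)%N ->
      n%:R^-1 * \sum_(i < n) hausdorff (mm_img G (A (i + m)%N)) (A (i + m).+1)
        < delta.

Definition avg_shadowing (G : seq (X -> X)) : Prop :=
  forall eps : R, 0 < eps -> exists2 delta : R, 0 < delta &
    forall A : nat -> set X, avg_pseudo_orbit G delta A ->
      exists y : X,
        (limn_esup (fun n : nat =>
           (n%:R^-1 * \sum_(i < n) hausdorff (mm_img (mm_iter G i) [set y]) (A i))%:E)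
         < eps%:E)%E.

End MetricDefs.

(* Main.v *)
Require Import Defs.
From mathcomp Require Import all_boot all_order all_algebra zify.
From mathcomp Require Import all_classical all_reals all_analysis lra.
Import Order.TTheory GRing.Theory Num.Theory.
Local Open Scope classical_set_scope.
Local Open Scope ring_scope.
Set Implicit Arguments. Unset Strict Implicit.

Lemma sup_in (R : realType) (E : set R) (D : R) : 0 <= D ->
  (forall x, E x -> 0 <= x <= D) -> 0 <= sup E <= D.
Proof.
move=> D0 HE; have [->|/set0P [x Ex]] := eqVneq E set0; first by rewrite sup0 lexx.
have ub : ubound E D by move=> y /HE /andP[].
have hs : has_ubound E by exists D.
apply/andP; split; last by apply: ge_sup => //; exists x.
have /andP[x0 _] := HE x Ex.
by apply: le_trans x0 _; apply: ub_le_sup.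
Qed.

Lemma inf_in (R : realType) (E : set R) (D : R) : 0 <= D ->
  (forall x, E x -> 0 <= x <= D) -> 0 <= inf E <= D.
Proof.
move=> D0 HE; have [->|/set0P [x Ex]] := eqVneq E set0; first by rewrite inf0 lexx.
have lb : lbound E 0 by move=> y /HE /andP[].
have hs : has_lbound E by exists 0.
apply/andP; split; first by apply: lb_le_inf => //; exists x.
have /andP[_ xD] := HE x Ex.
by apply: le_trans xD; apply: ge_inf.
Qed.

Lemma d_ge0 (R : realType) (X : Type) (d : X -> X -> R) :
  is_metric d -> forall x y, 0 <= d x y.
Proof.
move=> [h0 [hs ht]] x y.
have := ht x y x; rewrite (proj2 (h0 x x) erefl) (hs y x).
move=> h; rewrite -(@pmulr_rge0 _ 2) //; rewrite mulr2n mulrDl !mul1r.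
by [].
Qed.

Lemma hausdorff_in (R : realType) (X : Type) (d : X -> X -> R) (D : R) A B :
  is_metric d -> 0 <= D -> (forall x y, d x y <= D) ->
  0 <= hausdorff d A B <= D.
Proof.
move=> hd D0 hD.
have H1 : forall (U V : set X) (f : X -> X -> R), (forall x y, 0 <= f x y <= D) ->
    0 <= sup [set inf [set f a b | b in V] | a in U] <= D.
  move=> U V f hf; apply: sup_in => // _ [a _ <-].
  by apply: inf_in => // _ [b _ <-].
have hA := H1 A B d (fun x y => introT andP (conj (d_ge0 hd x y) (hD x y))).
have hB := H1 B A (fun b a => d a b) (fun x y => introT andP (conj (d_ge0 hd y x) (hD y x))).
rewrite /hausdorff; case/andP: hA => a0 aD; case/andP: hB => b0 bD.
by rewrite le_max a0 /= ge_max aD bD.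
Qed.

Lemma hausdorff_refl (R : realType) (X : Type) (d : X -> X -> R) A :
  is_metric d -> hausdorff d A A = 0.
Proof.
move=> hd.
have H : forall f : X -> X -> R, (forall x y, 0 <= f x y) -> (forall x, f x x = 0) ->
    sup [set inf [set f a b | b in A] | a in A] = 0.
  move=> f f0 fxx; apply/eqP; rewrite eq_le.
  suff /andP[-> ->] : 0 <= sup [set inf [set f a b | b in A] | a in A] <= 0 by [].
  apply: sup_in => // _ [a Aa <-].
  have lb : lbound [set f a b | b in A] 0 by move=> _ [b _ <-].
  apply/andP; split; first by apply: lb_le_inf => //; exists (f a a), a.
  by rewrite -(fxx a); apply: ge_inf; [exists 0|exists a].
rewrite /hausdorff (H d (d_ge0 hd)) ?(H (fun b a => d a b)) ?maxxx //.
- by move=> x y; apply: d_ge0.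
- by move=> x; case: hd => h0 _; apply/h0.
- by move=> x; case: hd => h0 _; apply/h0.
Qed.

Lemma incr_lt (s : nat -> nat) : (forall n, (s n < s n.+1)%N) ->
  forall a b, (a < b)%N -> (s a < s b)%N.
Proof.
move=> hs a; elim=> // b IH; rewrite ltnS leq_eqVlt => /orP[/eqP->//|ab].
exact: ltn_trans (IH ab) (hs b).
Qed.

Lemma incr_ge (s : nat -> nat) : (forall n, (s n < s n.+1)%N) ->
  forall n, (n <= s n)%N.
Proof. move=> hs; elim=> // n IH; exact: leq_ltn_trans IH (hs n). Qed.

Lemma compact_img (R : realType) (X : Type) (d : X -> X -> R) (S : set X) (f : X -> X) :
  is_metric d -> d_compact d S -> d_continuous d f -> d_compact d (f @` S).
Proof.
move=> [_ [hs _]] hS hf u hu.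
have hu' : forall n, exists a, S a /\ f a = u n by move=> n; case: (hu n) => a ? ?; exists a.
have [v hv] := choice hu'.
have [phi [l [hphi [Sl hl]]]] := hS v (fun n => proj1 (hv n)).
exists phi, (f l); split => //; split; first by exists l.
move=> e e0; have [de de0 hde] := hf l e e0.
have [N hN] := hl de de0; exists N => n Nn /=.
rewrite -(proj2 (hv (phi n))) hs; apply: hde; rewrite hs; exact: hN.
Qed.

Lemma compact_union (R : realType) (X : Type) (d : X -> X -> R) (S1 S2 : set X) :
  d_compact d S1 -> d_compact d S2 -> d_compact d (S1 `|` S2).
Proof.
move=> h1 h2 u hu.
have [H|H] := pselect (forall N, exists n, (N <= n)%N /\ S1 (u n)).
  have [c hc] := choice H.
  pose sig := fix sig n := match n with 0 => c 0%N | n'.+1 => c (sig n').+1 end.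
  have sig_inc : forall n, (sig n < sig n.+1)%N by move=> n /=; exact: (proj1 (hc _)).
  have [phi [l [hphi [Sl hl]]]] := h1 (u \o sig) (fun n => match n with 0 => proj2 (hc 0%N) | n'.+1 => proj2 (hc _) end).
  exists (sig \o phi), l; split; last by split; [left|].
  by move=> n /=; apply: incr_lt.
have [N HN] : exists N, forall n, (N <= n)%N -> S2 (u n).
  apply: contrapT => H'; apply: H => N.
  apply: contrapT => H2; apply: H' ; exists N => n Nn.
  case: (hu n) => // h; exfalso; apply: H2; by exists n.
have [phi [l [hphi [Sl hl]]]] := h2 (fun n => u (n + N)%N) (fun n => HN _ (leq_addl _ _)).
exists (fun n => phi n + N)%N, l; split; last by split; [right|].
by move=> n; rewrite ltn_add2r.
Qed.

Lemma mm_img2 (X : Type) (f1 f2 : X -> X) (S : set X) :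
  mm_img [:: f1; f2] S = f1 @` S `|` f2 @` S.
Proof.
rewrite /mm_img; apply/seteqP; split => x /=.
  by case=> g [<-|[<-|[]]] [a Sa ->]; [left|right]; exists a.
by case=> -[a Sa <-]; [exists f1; [left|exists a]|exists f2; [right; left|exists a]].
Qed.

Lemma iter_KX (R : realType) (X : Type) (d : X -> X -> R) (f1 f2 : X -> X) n S :
  is_metric d -> d_continuous d f1 -> d_continuous d f2 ->
  in_KX d S -> in_KX d (iter n (mm_img [:: f1; f2]) S).
Proof.
move=> hd h1 h2; elim: n => // n IH /IH [[x Sx] cS] /=; rewrite mm_img2; split.
  by exists (f1 x); left; exists x.
by apply: compact_union; apply: compact_img.
Qed.

Lemma d_bounded (R : realType) (X : Type) (d : X -> X -> R) (x0 : X) :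
  is_metric d -> d_compact d setT -> exists D, 0 <= D /\ forall x y, d x y <= D.
Proof.
move=> hd hX.
suff [M hM] : exists M, forall y, d x0 y <= M.
  exists (M + M); split.
    by apply: addr_ge0; apply: le_trans (hM x0); apply: d_ge0.
  move=> x y; case: hd => _ [hs ht]; apply: le_trans (ht x x0 y) _.
  by rewrite hs; apply: lerD.
apply: contrapT => H.
have H' : forall n : nat, exists y, n%:R < d x0 y.
  move=> n; apply: contrapT => H2; apply: H; exists n%:R => y.
  by rewrite leNgt; apply/negP => h; apply: H2; exists y.
have [u hu] := choice H'.
have [phi [l [hphi [_ hl]]]] := hX u (fun _ => I).
have [N hN] := hl 1 ltr01.
have dl0 : 0 <= d x0 l + 1 by apply: addr_ge0 => //; apply: d_ge0.
pose n := maxn N (Num.bound (d x0 l + 1)).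
have := hu (phi n); case: hd => _ [hs ht] hn.
have : d x0 (u (phi n)) < d x0 l + 1.
  apply: le_lt_trans (ht x0 l _) _; rewrite ltrD2l hs; exact: hN (leq_maxl _ _).
move=> h; have := lt_trans hn h.
have : (Num.bound (d x0 l + 1))%:R <= (phi n)%:R :> R.
  rewrite ler_nat; apply: leq_trans (leq_maxr N _) (incr_ge hphi n).
move=> h1 h2; have := lt_trans (archi_boundP dl0) (le_lt_trans h1 h2).
by rewrite ltxx.
Qed.
Lemma In_cat (T : Type) (x : T) (s1 s2 : seq T) :
  List.In x (s1 ++ s2) <-> List.In x s1 \/ List.In x s2.
Proof.
elim: s1 => [|a s IH] /=; first by split; [right|case].
rewrite IH; tauto.
Qed.

Lemma In_map (T U : Type) (f : T -> U) (y : U) (s : seq T) :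
  List.In y (map f s) <-> exists x, List.In x s /\ y = f x.
Proof.
elim: s => [|a s IH] /=; first by split => // -[x []].
rewrite IH; split.
  by case=> [<-|[x [xs ->]]]; [exists a; split; [left|]|exists x; split; [right|]].
by case=> x [[<-|xs] ->]; [left|right; exists x].
Qed.

Lemma In_allpairs (X : Type) (G H : seq (X -> X)) (f : X -> X) :
  List.In f [seq g \o h | g <- G, h <- H] <->
  exists g h, List.In g G /\ List.In h H /\ f = g \o h.
Proof.
elim: G => [|a G IH] /=; first by split => // -[g [h []]].
rewrite In_cat IH In_map; split.
  case=> [[h [hH ->]]|[g [h [gG [hH ->]]]]].
    by exists a, h; split; [left|].
  by exists g, h; split; [right|].
case=> g [h [[<-|gG] [hH ->]]]; first by left; exists h.
by right; exists g, h.
Qed.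

Lemma mm_iterE (X : Type) (G : seq (X -> X)) n (S : set X) :
  mm_img (mm_iter G n) S = iter n (mm_img G) S.
Proof.
elim: n S => [|n IH] S /=.
  rewrite /mm_img; apply/seteqP; split => x /=.
    by case=> g [<-|[]] [a Sa ->].
  by move=> Sx; exists id; [left|exists x].
rewrite -IH /mm_img; apply/seteqP; split => x /=.
  case=> f /In_allpairs [g [h [gG [hH ->]]]] [a Sa ->].
  by exists g => //; exists (h a) => //; exists h => //; exists a.
case=> g gG [b [h hH [a Sa ->]] ->].
by exists (g \o h); [apply/In_allpairs; exists g, h|exists a].
Qed.

Lemma iter_iter (T : Type) (f : T -> T) k i x :
  iter i (iter k f) x = iter (k * i) f x.
Proof.
elim: i x => [|i IH] x /=; first by rewrite muln0.
by rewrite IH mulnS iterD.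
Qed.
Local Open Scope nat_scope.
Lemma divmodS j k : (0 < k)%N ->
  if j %% k == k.-1 then j.+1 %% k = 0 /\ j.+1 %/ k = (j %/ k).+1
  else j.+1 %% k = (j %% k).+1 /\ j.+1 %/ k = j %/ k.
Proof.
move=> k0; have hr := ltn_pmod j k0.
have ej : j.+1 = (j %/ k) * k + (j %% k).+1 by rewrite {1}(divn_eq j k) addnS.
case: eqP => h.
  have ej' : j.+1 = (j %/ k).+1 * k + 0.
    by rewrite ej h mulSn addn0 prednK // addnC.
  by rewrite ej' modnMDl divnMDl // mod0n div0n; split => //; lia.
have hr' : ((j %% k).+1 < k)%N by move: hr h; lia.
by rewrite ej; split; [rewrite modnMDl modn_small|rewrite divnMDl // (divn_small hr') addn0].
Qed.
Lemma kmod k i : (0 < k)%N -> (k * i) %% k = 0 /\ (k*i) %/ k = i.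
Proof. by move=> k0; rewrite mulnC modnMl mulnK. Qed.
Lemma divDle m n k : (1 < k)%N -> (0 < n)%N -> ((m + n) %/ k <= m %/ k + n)%N.
Proof.
move=> k1 n0; have := leq_divDl k m n; have := ltn_Pdiv k1 n0; lia.
Qed.
Local Open Scope ring_scope.

Lemma sumQ (R : realType) (e : nat -> R) (D dl : R) (N m q : nat) :
  (forall p, 0 <= e p <= D) -> 0 <= D -> 0 <= dl -> (0 < N)%N ->
  (forall n m, (N <= n)%N -> (0 < m)%N -> n%:R^-1 * \sum_(i < n) e (i + m)%N < dl) ->
  (0 < m)%N -> \sum_(i < q) e (i + m)%N <= N%:R * D + q%:R * dl.
Proof.
move=> he D0 dl0 N0 hN m0.
have S0 : 0 <= \sum_(i < q) e (i + m)%N by apply: sumr_ge0 => i _; case/andP: (he (i+m)%N).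
case: (leqP N q) => Nq.
  have q0 : 0 < q%:R :> R by rewrite ltr0n; apply: leq_trans Nq.
  have := hN q m Nq m0; rewrite -ltr_pdivlMl ?invr_gt0 // invrK => h.
  apply: le_trans (ltW h) _; rewrite mulrC lerDr; apply: mulr_ge0 => //.
apply: le_trans (_ : \sum_(i < q) D <= _).
  by apply: ler_sum => i _; case/andP: (he (i+m)%N).
rewrite sumr_const card_ord -[D *+ q]mulr_natl.
apply: le_trans (_ : N%:R * D <= _); last first.
- by rewrite lerDl mulr_ge0.
- by apply: ler_wpM2r => //; rewrite ler_nat ltnW.
Qed.

Lemma sum_range (R : realType) (e : nat -> R) (D dl : R) (N a b n : nat) :
  (forall p, 0 <= e p <= D) -> 0 <= D -> 0 <= dl -> (0 < N)%N ->
  (forall n m, (N <= n)%N -> (0 < m)%N -> n%:R^-1 * \sum_(i < n) e (i + m)%N < dl) ->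
  (a <= b)%N -> (b <= a + n)%N ->
  \sum_(a <= p < b) e p <= D + N%:R * D + n%:R * dl.
Proof.
move=> he D0 dl0 N0 hN ab ban.
have Q m q := @sumQ R e D dl N m q he D0 dl0 N0 hN.
case: (posnP a) => [a0|a0].
  subst a; case: (posnP b) => [->|b0]; first by rewrite big_geq // addr_ge0 // ?addr_ge0 ?mulr_ge0.
  rewrite big_ltn // -addrA; apply: lerD; first by case/andP: (he 0%N).
  rewrite -(add0n 1%N) big_addn big_mkord; apply: le_trans (Q 1%N (b - 1)%N isT) _.
  rewrite lerD2l ler_wpM2r // ler_nat; lia.
rewrite -(add0n a) big_addn big_mkord; apply: le_trans (Q a (b - a)%N a0) _.
have h1 : (b - a)%:R * dl <= n%:R * dl by apply: ler_wpM2r => //; rewrite ler_nat; lia.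
lra.
Qed.

Theorem theorem4p2 (R : realType) (X : Type) (d : X -> X -> R)
  (hd : is_metric d) (hX : d_compact d setT)
  (f1 f2 : X -> X) (hf1 : d_continuous d f1) (hf2 : d_continuous d f2) :
  avg_shadowing d [:: f1; f2] ->
  forall k : nat, (1 < k)%N -> avg_shadowing d (mm_iter [:: f1; f2] k).
Proof.
move=> hF k k1 eps eps0.
have k0 : (0 < k)%N by apply: ltnW.
have kR : 0 < k%:R :> R by rewrite ltr0n.
have [delta delta0 hdelta] := hF (eps / k%:R) (divr_gt0 eps0 kR).
exists (delta / 2); first by rewrite divr_gt0.
move=> A [hAK [[x0 hA0] [N [N0 hN]]]].
have [D [D0 hD]] := d_bounded x0 hd hX.
pose Fi := mm_img [:: f1; f2].
pose B j := iter (j %% k)%N Fi (A (j %/ k)%N).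
pose e p := hausdorff d (mm_img (mm_iter [:: f1; f2] k) (A p)) (A p.+1).
pose t j := hausdorff d (Fi (B j)) (B j.+1).
have he : forall p, 0 <= e p <= D by move=> p; apply: hausdorff_in.
have ht : forall j, t j = if (j %% k == k.-1)%N then e (j %/ k)%N else 0.
  move=> j; have := divmodS j k0; rewrite /t /B.
  case: eqP => h [-> ->] /=.
    by rewrite /e mm_iterE h -iterS prednK.
  by rewrite hausdorff_refl.
have St : forall M, \sum_(0 <= j < M) t j = \sum_(0 <= p < (M %/ k)%N) e p.
  elim => [|M IH]; first by rewrite div0n !big_geq.
  rewrite big_nat_recr // IH ht; have := divmodS M k0; case: eqP => h [_ ->].
    by rewrite big_nat_recr.
  by rewrite /= addr0.
have hBo : avg_pseudo_orbit d [:: f1; f2] delta B.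
  split; first by move=> n; apply: iter_KX.
  split; first by exists x0; rewrite /B mod0n div0n.
  pose C := 2 * (D + N%:R * D) / delta.
  have C0 : 0 <= C by rewrite /C divr_ge0 ?mulr_ge0 ?addr_ge0 ?mulr_ge0 // ltW.
  exists (Num.bound C).+1; split => // n m nN m0.
  have n0 : (0 < n)%N by apply: leq_trans nN.
  have E1 : \sum_(m <= j < m + n) t j = \sum_(i < n) t (i + m)%N.
    by rewrite -{1}(add0n m) big_addn addKn big_mkord.
  rewrite [X in _ * X](_ : _ = \sum_(i < n) t (i + m)%N) //.
  rewrite -E1.
  have e1 := @big_cat_nat R 0 +%R m 0 (m + n) xpredT t (leq0n m) (leq_addr n m).
  have e2 := @big_cat_nat R 0 +%R (m %/ k)%N 0 ((m + n) %/ k)%N xpredT e (leq0n _) (leq_div2r k (leq_addr n m)).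
  rewrite !St in e1.
  have -> : \sum_(m <= j < m + n) t j = \sum_((m %/ k)%N <= p < ((m + n) %/ k)%N) e p.
    by move: e1; rewrite e2 => /addrI.
  have hsum := @sum_range R e D (delta / 2) N (m %/ k)%N ((m + n) %/ k)%N n he D0
     (ltW (divr_gt0 delta0 (ltr0Sn _ 1))) N0 hN (leq_div2r k (leq_addr n m)) (divDle m k1 n0).
  have hC : C < n%:R.
    apply: lt_le_trans (archi_boundP C0) _; rewrite ler_nat; exact: ltnW.
  have nR : 0 < n%:R :> R by rewrite ltr0n.
  move: hC; rewrite /C ltr_pdivrMr // => hC.
  rewrite mulrC ltr_pdivrMr //.
  lra.
have [y hy] := hdelta B hBo; exists y.
pose hB i := hausdorff d (mm_img (mm_iter [:: f1; f2] i) [set y]) (B i).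
have fe : mm_img (mm_iter [:: f1; f2] k) = iter k (mm_img [:: f1; f2]).
  by apply/funext => S; exact: mm_iterE.
have hAB : forall i, hausdorff d (mm_img (mm_iter (mm_iter [:: f1; f2] k) i) [set y]) (A i)
    = hB (k * i)%N.
  move=> i; rewrite /hB mm_iterE fe iter_iter -mm_iterE /B.
  by have [-> ->] := kmod i k0.
have hB0 : forall i, 0 <= hB i by move=> i; case/andP: (@hausdorff_in R X d D (mm_img (mm_iter [:: f1; f2] i) [set y]) (B i) hd D0 hD).
have sumle : forall n, \sum_(0 <= i < n) hB (k * i)%N <= \sum_(0 <= j < k * n) hB j.
  elim => [|n IH]; first by rewrite muln0 !big_geq.
  rewrite big_nat_recr // mulnS addnC (@big_cat_nat R 0 +%R (k * n)%N 0 (k * n + k)%N xpredT hB (leq0n _) (leq_addr k (k * n))) /=.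
  apply: lerD => //; rewrite big_ltn /=; last by lia.
  rewrite lerDl.
  by apply: sumr_ge0 => j _.
have key : forall n, n%:R^-1 * \sum_(i < n) hB (k * i)%N <=
    k%:R * ((k * n)%N%:R^-1 * \sum_(j < k * n) hB j).
  case => [|n]; first by rewrite muln0 !big_ord0 !mulr0.
  rewrite natrM invfM mulrA mulrA divff ?mul1r ?(gt_eqF kR) //.
  apply: ler_wpM2l; [by rewrite invr_ge0 ler0n|]; have := sumle n.+1; by rewrite !big_mkord.
have -> : (fun n : nat => (n%:R^-1 * \sum_(i < n) hausdorff d
      (mm_img (mm_iter (mm_iter [:: f1; f2] k) i) [set y]) (A i))%:E)
    = (fun n : nat => (n%:R^-1 * \sum_(i < n) hB (k * i)%N)%:E).
  by apply/funext => n; under eq_bigr do rewrite hAB.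
move: hy; rewrite /limn_esup /limf_esup => /ereal_inf_lt [_ [V [r _ rV] <-] hs].
apply: (@le_lt_trans _ _ (ereal_sup ((fun n : nat => (n%:R^-1 * \sum_(i < n) hB (k * i)%N)%:E) @` [set n | (r <= n)%N]))).
  by apply: ereal_inf_lbound; exists [set n | (r <= n)%N] => //; exists r.
move: hs.
set s := ereal_sup _.
have sub : forall n, (r <= n)%N -> ((n%:R^-1 * \sum_(i < n) hB i)%:E <= s)%E.
  by move=> n rn; apply: ereal_sup_ubound; exists n => //; apply: rV.
move: s sub => [s'| |] sub hs; last first.
- by have := sub r (leqnn r).
- by [].
apply: (@le_lt_trans _ _ (k%:R * s')%:E).
  apply: ge_ereal_sup => _ [n rn <-]; rewrite lee_fin.
  apply: le_trans (key n) _; apply: ler_wpM2l => //.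
  have := sub (k * n)%N; rewrite lee_fin; apply.
  by apply: leq_trans rn _; rewrite leq_pmull.
by move: hs; rewrite !lte_fin ltr_pdivlMr // mulrC.
Qed.
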